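(* Let $G'$ be an $\mathcal{R}_3$-independent graph and let $G$ be obtained from $G'$ by a double-1-extension. Then $G$ is $\mathcal{R}_3$-independent.
   Context: All graphs are finite and simple. $G$ is obtained from $G'$ by a double-1-extension if $G$ is obtained by deleting an edge $uv$ of $G'$, adding two new vertices $a,b$, and adding 7 new edges: $ab$, three edges joining $a$ to vertices of $G'$ and three edges joining $b$ to vertices of $G'$, such that $u,v\in N(a)\cup N(b)$. For $p:V\to\mathbb{R}^3$, the rigidity matrix $R(G,p)$ is the $|E|\times 3|V|$ matrix whose row for edge $xy$ has $p(x)-p(y)$ in the columns of $x$, $p(y)-p(x)$ in the columns of $y$, zeros elsewhere; a graph is $\mathcal{R}_3$-independent if these rows are linearly independent for generic $p$ (coordinates algebraically independent over $\mathbb{Q}$). *)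

(* Defs.v *)
From HB Require Import structures.
From mathcomp Require Import all_boot all_order all_algebra.
From mathcomp Require Import reals.
From mathcomp Require Import mpoly.
Set Implicit Arguments. Unset Strict Implicit. Unset Printing Implicit Defensive.
Import Order.TTheory GRing.Theory Num.Theory.
Local Open Scope ring_scope.

Record graph (T : finType) := Graph { gV : {set T}; gE : {set {set T}} }.

Definition simple_graph (T : finType) (G : graph T) : Prop :=
  forall e, e \in gE G -> #|e| = 2%N /\ e \subset gV G.

Definition double_1_extension (T : finType) (G' G : graph T) : Prop :=
  exists (u v a b : T) (Na Nb : {set T}),
    [/\ [set u; v] \in gE G',
        [/\ a \notin gV G', b \notin gV G' & a != b],
        [/\ Na \subset gV G', Nb \subset gV G', #|Na| = 3%N & #|Nb| = 3%N],
        (u \in Na :|: Nb) /\ (v \in Na :|: Nb) &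
        gV G = gV G' :|: [set a; b] /\
        gE G = ((gE G' :\ [set u; v]) :|: [set [set a; b]])
               :|: ([set [set a; x] | x in Na] :|: [set [set b; x] | x in Nb])].

(* Entry of the rigidity matrix R(G,p) in row e = {x,y} and column (z,k):
   p(x)-p(y) (k-th coordinate) if z = x, p(y)-p(x) if z = y, 0 otherwise.
   For a 2-set e containing z, the sum below has exactly one nonzero term,
   namely p(z)-p(w) for the other endpoint w. *)
Definition rig_entry (R : realType) (T : finType) (p : T -> 'rV[R]_3)
    (e : {set T}) (z : T) (k : 'I_3) : R :=
  if z \in e then \sum_(w in e) (p z 0 k - p w 0 k) else 0.

Definition rows_independent (R : realType) (T : finType) (G : graph T)
    (p : T -> 'rV[R]_3) : Prop :=
  forall w : {set T} -> R,
    (forall z, z \in gV G -> forall k : 'I_3,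
        \sum_(e in gE G) w e * rig_entry p e z k = 0) ->
    forall e, e \in gE G -> w e = 0.

Definition generic (R : realType) (T : finType) (p : T -> 'rV[R]_3) : Prop :=
  forall P : {mpoly rat[#|{: T * 'I_3}|]}, P != 0 ->
    (map_mpoly (GRing.RMorphism.clone _ _ (@ratr R) _) P).@[
       fun i : 'I_#|{: T * 'I_3}| =>
         let xk := enum_val i in p xk.1 0 xk.2] != 0.

Definition R3_independent (R : realType) (T : finType) (G : graph T) : Prop :=
  forall p : T -> 'rV[R]_3, generic p -> rows_independent G p.

(* Main.v *)
Require Import Defs.
From mathcomp Require Import all_boot all_order all_algebra reals mpoly.
From mathcomp Require Import ring lra.
Set Implicit Arguments. Unset Strict Implicit. Unset Printing Implicit Defensive.
Import Order.TTheory GRing.Theory Num.Theory.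
Local Open Scope ring_scope.

Section Inf.
Variable T : finType.

Definition rent (K : pzRingType) (f : T -> 'I_3 -> K) (e : {set T}) (z : T) (k : 'I_3) : K :=
  if z \in e then \sum_(w in e) (f z k - f w k) else 0.

Lemma rent_map (K K' : pzRingType) (h : {rmorphism K -> K'}) f e z k :
  h (rent f e z k) = rent (fun z k => h (f z k)) e z k.
Proof.
rewrite /rent; case: ifP => _; last by rewrite rmorph0.
by rewrite rmorph_sum; apply: eq_bigr => w _; rewrite rmorphB.
Qed.

Definition RM (K : pzRingType) (G : graph T) (f : T -> 'I_3 -> K) :
   'M[K]_(#|{: {set T}}|, #|{: T * 'I_3}|) :=
  \matrix_(i, j) (if (enum_val i \in gE G) && ((enum_val j).1 \in gV G)
                  then rent f (enum_val i) (enum_val j).1 (enum_val j).2 else 0).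

Definition DM (K : pzRingType) (G : graph T) : 'M[K]_#|{: {set T}}| :=
  diag_mx (\row_i (if enum_val i \in gE G then 0 else 1)).

Definition KM (K : comNzRingType) (G : graph T) (f : T -> 'I_3 -> K) :=
  RM G f *m (RM G f)^T + DM K G.

Lemma KM_map (K K' : comNzRingType) (h : {rmorphism K -> K'}) G f :
  map_mx h (KM G f) = KM G (fun z k => h (f z k)).
Proof.
rewrite /KM map_mxD map_mxM -map_trmx /DM map_diag_mx.
have -> : map_mx h (RM G f) = RM G (fun z k => h (f z k)).
  apply/matrixP => i j; rewrite !mxE; case: ifP => _; last by rewrite rmorph0.
  by rewrite rent_map.
congr (_ + _); congr diag_mx; apply/matrixP => i j; rewrite !mxE.
by case: ifP => _; rewrite ?rmorph0 ?rmorph1.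
Qed.

Lemma cRM (K : comNzRingType) G (f : T -> 'I_3 -> K) (c : 'rV_#|{: {set T}}|) j :
  (c *m RM G f) 0 j = if (enum_val j).1 \in gV G then
     \sum_(e in gE G) c 0 (enum_rank e) * rent f e (enum_val j).1 (enum_val j).2 else 0.
Proof.
rewrite mxE; case: ifP => hz.
  rewrite (reindex (@enum_rank _)); last first.
    by apply: onW_bij; apply: enum_rank_bij.
  rewrite [RHS]big_mkcond; apply: eq_bigr => e _; rewrite !mxE enum_rankK hz andbT.
  by case: ifP; rewrite ?mulr0.
by apply: big1 => i _; rewrite !mxE hz andbF mulr0.
Qed.

Lemma KM_indep (F : fieldType) G (f : T -> 'I_3 -> F) : \det (KM G f) != 0 ->
  forall w : {set T} -> F,
    (forall z, z \in gV G -> forall k : 'I_3,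
        \sum_(e in gE G) w e * rent f e z k = 0) ->
    forall e, e \in gE G -> w e = 0.
Proof.
move=> hdet w hw e he.
pose c : 'rV_#|{: {set T}}| := \row_i (if enum_val i \in gE G then w (enum_val i) else 0).
have hc : c *m KM G f = 0.
  rewrite /KM mulmxDr mulmxA.
  have -> : c *m RM G f = 0.
    apply/matrixP => i j; rewrite ord1 cRM [RHS]mxE; case: ifP => hz //.
    rewrite -[RHS](hw _ hz (enum_val j).2); apply: eq_bigr => e' he'.
    by rewrite mxE enum_rankK he'.
  rewrite mul0mx add0r /DM mul_mx_diag; apply/matrixP => i j; rewrite !mxE.
  by case: ifP => _; rewrite ?mulr0 ?mul0r.
have hu : KM G f \in unitmx by rewrite unitmxE unitfE.
have : c = 0 by rewrite -(mulmxK hu c) hc mul0mx.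
move/matrixP/(_ 0 (enum_rank e)); rewrite !mxE enum_rankK he.
by [].
Qed.

Lemma indep_KM (R : realType) G (f : T -> 'I_3 -> R) :
  (forall w : {set T} -> R,
    (forall z, z \in gV G -> forall k : 'I_3,
        \sum_(e in gE G) w e * rent f e z k = 0) ->
    forall e, e \in gE G -> w e = 0) -> \det (KM G f) != 0.
Proof.
move=> hind; apply/negP => /det0P [c cne0 cK].
pose y := c *m RM G f.
pose d : 'rV[R]_#|{: {set T}}| := \row_i (if enum_val i \in gE G then 0 else 1).
have h0 : (y *m y^T + c *m DM R G *m c^T) = 0.
  have -> : y *m y^T + c *m DM R G *m c^T = c *m KM G f *m c^T.
    by rewrite /KM /y trmx_mul mulmxDr mulmxDl !mulmxA.
  by rewrite cK mul0mx.
move/matrixP/(_ 0 0): h0; rewrite !mxE /DM mul_mx_diag -/d.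
have p1 : 0 <= \sum_j y 0 j * y^T j 0.
  by apply: sumr_ge0 => j _; rewrite [y^T _ _]mxE -expr2 sqr_ge0.
have p2 : 0 <= \sum_j (\matrix_(i, j0) (c i j0 * d 0 j0)) 0 j * c^T j 0.
  apply: sumr_ge0 => j _; rewrite !mxE; case: ifP => _; rewrite ?mulr0 ?mul0r //.
  by rewrite mulr1 -expr2 sqr_ge0.
move/eqP; rewrite paddr_eq0 // => /andP [/eqP s1 /eqP s2].
have hy : forall j, y 0 j = 0.
  have hh : forall j, true -> 0 <= y 0 j * y^T j 0.
    by move=> j' _; rewrite [y^T _ _]mxE -expr2 sqr_ge0.
  move=> j; have /eqP := psumr_eq0P hh s1 (i := j) isT.
  by rewrite [y^T _ _]mxE mulf_eq0 orbb => /eqP.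
have hd : forall i, enum_val i \notin gE G -> c 0 i = 0.
  have hh : forall j, true -> 0 <= (\matrix_(i, j0) (c i j0 * d 0 j0)) 0 j * c^T j 0.
    move=> j _; rewrite !mxE; case: ifP => _; rewrite ?mulr0 ?mul0r //.
    by rewrite mulr1 -expr2 sqr_ge0.
  move=> i hi; have /eqP := psumr_eq0P hh s2 (i := i) isT.
  by rewrite !mxE (negbTE hi) mulr1 mulf_eq0 orbb => /eqP.
have hw := hind (fun e => c 0 (enum_rank e)).
have : c = 0.
  apply/matrixP => i j; rewrite ord1 mxE.
  case hj : (enum_val j \in gE G); last by rewrite hd ?hj.
  rewrite -(enum_valK j); apply: hw => // z hz k.
  have := hy (enum_rank (z, k)); rewrite /y cRM enum_rankK /= hz.
  by [].
by move/eqP: cne0.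
Qed.
End Inf.

Section Gen.
Variables (R : realType) (T : finType).
Local Notation N := #|{: T * 'I_3}|.
Definition phi (x : 'I_N -> R) :=
  (meval x \o map_mpoly (GRing.RMorphism.clone _ _ (@ratr R) _)).
Lemma phiX x i : phi x 'X_i = x i.
Proof. by rewrite /phi /= /map_mpoly mmapX mmap1U mevalXU. Qed.
Lemma phi0 x : phi x 0 = 0. Proof. exact: (rmorph0 (phi x)). Qed.
Lemma phi1 x : phi x 1 = 1. Proof. exact: (rmorph1 (phi x)). Qed.
Definition Xs : T -> 'I_3 -> {mpoly rat[N]} := fun z k => 'X_(enum_rank (z,k)).
Definition ptx (p : T -> 'rV[R]_3) : 'I_N -> R :=
  fun i => let xk := enum_val i in p xk.1 0 xk.2.
Lemma phi_Xs p : (fun z k => phi (ptx p) (Xs z k)) = (fun z k => p z 0 k).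
Proof.
by apply: boolp.funext => z; apply: boolp.funext => k; rewrite phiX /ptx enum_rankK.
Qed.
Lemma generic_poly p : generic p -> forall P, phi (ptx p) P = 0 -> P = 0.
Proof.
move=> gp P h; apply/eqP; apply: contraT => /gp; rewrite -/(ptx p).
by rewrite -[X in X != 0]/(phi (ptx p) P) h eqxx.
Qed.

Lemma transfer (G : graph T) (p q : T -> 'rV[R]_3) : generic p ->
  \det (KM G (fun z k => q z 0 k)) != 0 -> \det (KM G (fun z k => p z 0 k)) != 0.
Proof.
move=> gp hq; pose P := \det (KM G Xs).
have hv : forall p', phi (ptx p') P = \det (KM G (fun z k => p' z 0 k)).
  move=> p'; have := det_map_mx (phi (ptx p')) (KM G Xs).
  by move=> e; apply: eq_trans (esym e) _; rewrite KM_map phi_Xs.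
rewrite -hv; apply/eqP => /(generic_poly gp) P0.
by move: hq; rewrite -hv P0 phi0 eqxx.
Qed.

Definition M3 (K : pzRingType) (f : T -> 'I_3 -> K) (u v x y : T) : 'M[K]_3 :=
  \matrix_(i, k) (f (nth u [:: v; x; y] i) k - f u k).

Lemma NC (p : T -> 'rV[R]_3) u v x y : generic p -> u != v -> u != x -> u != y -> v != x -> v != y -> x != y ->
  forall c1 c2 c3 : R, (forall k, c1 * (p v 0 k - p u 0 k) + c2 * (p x 0 k - p u 0 k)
                                + c3 * (p y 0 k - p u 0 k) = 0) -> [/\ c1 = 0, c2 = 0 & c3 = 0].
Proof.
move=> gp uv ux uy vx vy xy.
pose P := \det (M3 Xs u v x y).
have hv : forall p', phi (ptx p') P = \det (M3 (fun z k => p' z 0 k) u v x y).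
  move=> p'; have := det_map_mx (phi (ptx p')) (M3 Xs u v x y).
  move=> e; apply: eq_trans (esym e) _; congr (\det _); apply/matrixP => i k.
  by rewrite !mxE rmorphB /Xs; congr (_ - _); apply: eq_trans (phiX _ _) _; rewrite /ptx enum_rankK.
pose g : T -> 'rV[R]_3 := fun z => \row_k (if z == v then (k == 0 :> nat)%:R
   else if z == x then (k == 1 :> nat)%:R else if z == y then (k == 2 :> nat)%:R else 0).
have hg : M3 (fun z k => g z 0 k) u v x y = 1%:M.
  apply/matrixP => i k; rewrite !mxE.
  rewrite (negbTE uv) (negbTE ux) (negbTE uy) subr0.
  case: i => [[|[|[|//]]] ?]; case: k => [[|[|[|//]]] ?] /=;
   rewrite ?eqxx ?(negbTE vx) ?(negbTE vy) ?(negbTE xy) // ?(eq_sym x v) ?(eq_sym y v) ?(eq_sym y x) ?(negbTE vx) ?(negbTE vy) ?(negbTE xy) //.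
have Pn0 : P != 0.
  apply/eqP => P0; have := hv g; rewrite P0 phi0 hg det1 => /eqP.
  by rewrite eq_sym oner_eq0.
have hd : \det (M3 (fun z k => p z 0 k) u v x y) != 0.
  rewrite -hv; apply/eqP => /(generic_poly gp) P0; by rewrite P0 eqxx in Pn0.
have hu : M3 (fun z k => p z 0 k) u v x y \in unitmx by rewrite unitmxE unitfE.
move=> c1 c2 c3 hc.
pose c : 'rV[R]_3 := \row_i (nth 0 [:: c1; c2; c3] i).
have : c *m M3 (fun z k => p z 0 k) u v x y = 0.
  apply/matrixP => i k; rewrite ord1 !mxE !big_ord_recr big_ord0 /= !mxE /=.
  by rewrite add0r -(hc k).
move=> /(congr1 (mulmx^~ (invmx (M3 (fun z k => p z 0 k) u v x y)))).
rewrite mulmxK // mul0mx => /matrixP hc0.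
split.
- by have := hc0 0 0; rewrite !mxE.
- by have := hc0 0 1; rewrite !mxE.
- by have := hc0 0 2%:R; rewrite !mxE.
Qed.
End Gen.

Section Gr.
Variables (T : finType).

Definition D1 (G' G : graph T) (u v a b : T) (Na Nb : {set T}) : Prop :=
    [/\ [set u; v] \in gE G',
        [/\ a \notin gV G', b \notin gV G' & a != b],
        [/\ Na \subset gV G', Nb \subset gV G', #|Na| = 3%N & #|Nb| = 3%N],
        (u \in Na :|: Nb) /\ (v \in Na :|: Nb) &
        gV G = gV G' :|: [set a; b] /\
        gE G = ((gE G' :\ [set u; v]) :|: [set [set a; b]])
               :|: ([set [set a; x] | x in Na] :|: [set [set b; x] | x in Nb])].

Lemma D1_swapuv G' G u v a b Na Nb : D1 G' G u v a b Na Nb -> D1 G' G v u a b Na Nb.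
Proof.
have e : [set v; u] = [set u; v] :> {set T} by rewrite setUC.
by case=> h1 h2 h3 [h4 h5] [h6 h7]; split => //; rewrite e.
Qed.

Lemma D1_swapab G' G u v a b Na Nb : D1 G' G u v a b Na Nb -> D1 G' G u v b a Nb Na.
Proof.
case=> h1 [h2 h2' h2''] [h3 h3' h3'' h3'''] [h4 h5] [h6 h7]; split.
- exact: h1.
- by split => //; rewrite eq_sym.
- by split.
- by split; rewrite in_setU orbC -in_setU.
- split; first by rewrite h6 [[set b; a]]setUC.
  by rewrite h7 [[set b; a]]setUC [_ :|: [set [set b; x] | x in Nb]]setUC.
Qed.

Lemma rent_out (K : pzRingType) (f : T -> 'I_3 -> K) (e : {set T}) z k : z \notin e -> rent f e z k = 0.
Proof. by rewrite /rent => /negbTE ->. Qed.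

Lemma rent2 (K : pzRingType) (f : T -> 'I_3 -> K) a y z k : a != y ->
  rent f [set a; y] z k =
  if z == a then f a k - f y k else if z == y then f y k - f a k else 0.
Proof.
move=> ay; rewrite /rent !inE big_setU1 ?inE // big_set1.
case: (eqVneq z a) => [->|za] /=; first by rewrite subrr add0r.
case: (eqVneq z y) => [->|zy] //=; by rewrite subrr addr0.
Qed.

Lemma rent_eq (K : pzRingType) (f g : T -> 'I_3 -> K) (e : {set T}) z k :
  (forall w, w \in e -> f w k = g w k) -> f z k = g z k -> rent f e z k = rent g e z k.
Proof.
move=> h hz; rewrite /rent; case: ifP => // _; apply: eq_bigr => w hw; by rewrite hz (h w hw).
Qed.


Lemma D1_facts G' G u v a b Na Nb : simple_graph G' -> D1 G' G u v a b Na Nb ->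
  [/\ (forall e, e \in gE G' -> a \notin e /\ b \notin e),
      [/\ u \in gV G', v \in gV G' & u != v],
      (forall y, y \in Na :|: Nb -> [/\ y \in gV G', y != a & y != b]) &
      (forall z, z \in gV G' -> z \in gV G)].
Proof.
move=> sG [huv [aV bV ab] [NaV NbV _ _] _ [hV _]].
have eV : forall e, e \in gE G' -> forall y, y \in e -> y \in gV G'.
  by move=> e he y hy; case: (sG e he) => _ /subsetP; apply.
split.
- move=> e he; split; apply/negP => /(eV e he) h.
    by rewrite h in aV.
  by rewrite h in bV.
- split; first by apply: (eV _ huv); rewrite !inE eqxx.
    by apply: (eV _ huv); rewrite !inE eqxx orbT.
  by case: (sG _ huv); rewrite cards2; case: (u != v).
- move=> y; rewrite in_setU => /orP [] hy.
    have yV : y \in gV G' by apply: (subsetP NaV).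
    split => //; apply/eqP => e; subst y.
      by rewrite yV in aV.
    by rewrite yV in bV.
  have yV : y \in gV G' by apply: (subsetP NbV).
  split => //; apply/eqP => e; subst y.
    by rewrite yV in aV.
  by rewrite yV in bV.
- by move=> z hz; rewrite hV in_setU hz.
Qed.

Lemma sumU (K : nmodType) (I : finType) (A B : {set I}) (F : I -> K) :
  [disjoint A & B] -> \sum_(i in A :|: B) F i = \sum_(i in A) F i + \sum_(i in B) F i.
Proof. by move=> d; rewrite -bigU //; apply: eq_bigl => i; rewrite !inE. Qed.

Lemma disjP (I : finType) (A B : {set I}) :
  (forall x, x \in A -> x \in B -> False) -> [disjoint A & B].
Proof.
move=> h; rewrite -setI_eq0; apply/eqP/setP => x; rewrite !inE.
by apply/negP => /andP [xa xb]; exact: (h x xa xb).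
Qed.

Lemma set2_inj (a x y : T) : x != a -> [set a; x] = [set a; y] -> x = y.
Proof.
move=> xa e; have : x \in [set a; y] by rewrite -e !inE eqxx orbT.
by rewrite !inE (negbTE xa) => /eqP.
Qed.

Lemma SD (K : nmodType) G' G u v a b Na Nb (F : {set T} -> K) :
  simple_graph G' -> D1 G' G u v a b Na Nb ->
  \sum_(e in gE G) F e = \sum_(e in gE G' :\ [set u; v]) F e + F [set a; b]
     + \sum_(y in Na) F [set a; y] + \sum_(y in Nb) F [set b; y].
Proof.
move=> sG hD; have [hE _ hN _] := D1_facts sG hD.
case: hD => _ [aV bV ab] _ _ [_ ->].
have hNa : forall y, y \in Na -> y != a /\ y != b.
  by move=> y hy; case: (hN y); rewrite ?in_setU ?hy.
have hNb : forall y, y \in Nb -> y != a /\ y != b.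
  by move=> y hy; case: (hN y); rewrite ?in_setU ?hy ?orbT.
rewrite sumU; last first.
  apply: disjP => e; rewrite !inE => /orP [/andP [_ he] | /eqP ->].
    case: (hE e he) => ae be /orP [] /imsetP [x _ ex].
      by rewrite ex !inE eqxx in ae.
    by rewrite ex !inE eqxx in be.
  case/orP => /imsetP [x hx ex].
    have : b \in [set a; x] by rewrite -ex !inE eqxx orbT.
    case: (hNa x hx) => _ xb; by rewrite !inE eq_sym (negbTE ab) eq_sym (negbTE xb).
  have : a \in [set b; x] by rewrite -ex !inE eqxx.
  case: (hNb x hx) => xa _; by rewrite !inE (negbTE ab) eq_sym (negbTE xa).
rewrite sumU; last first.
  apply: disjP => e; rewrite !inE => /andP [_ he] /eqP ee.
  by case: (hE e he); rewrite ee !inE eqxx.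
rewrite sumU; last first.
  apply: disjP => e /imsetP [x hx ->] /imsetP [y hy ey].
  have : a \in [set b; y] by rewrite -ey !inE eqxx.
  case: (hNb y hy) => ya _; by rewrite !inE (negbTE ab) eq_sym (negbTE ya).
rewrite big_set1 !big_imset ?addrA //.
  by move=> x y hx _; apply: set2_inj; case: (hNb x hx).
by move=> x y hx _; apply: set2_inj; case: (hNa x hx).
Qed.


Lemma sum_if1 (K : nmodType) (A : {set T}) z (C : K) :
  \sum_(y in A) (if y == z then C else 0) = if z \in A then C else 0.
Proof.
case: (boolP (z \in A)) => hz.
  rewrite (bigD1 z) //= eqxx big1 ?addr0 // => y /andP [_ /negbTE ->] //.
by apply: big1 => y hy; case: eqP => // e; subst y; rewrite hy in hz.
Qed.

Lemma eqA (K : pzRingType) G' G u v a b Na Nb (f : T -> 'I_3 -> K) (w : {set T} -> K) k :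
  simple_graph G' -> D1 G' G u v a b Na Nb ->
  \sum_(e in gE G) w e * rent f e a k =
    w [set a; b] * (f a k - f b k) + \sum_(y in Na) w [set a; y] * (f a k - f y k).
Proof.
move=> sG hD; have [hE _ hN _] := D1_facts sG hD.
have [_ [aV bV ab] _ _ _] := hD.
rewrite (SD _ sG hD) big1 ?add0r; last first.
  by move=> e; rewrite in_setD1 => /andP [_ he]; rewrite rent_out ?mulr0 //; case: (hE e he).
rewrite rent2 // eqxx [X in _ + _ + X]big1 ?addr0; last first.
  move=> y hy; rewrite rent_out ?mulr0 // !inE negb_or ab /=.
  by case: (hN y); rewrite ?in_setU ?hy ?orbT // => _ ya _; rewrite eq_sym.
congr (_ + _); apply: eq_bigr => y hy; rewrite rent2 ?eqxx //.
by case: (hN y); rewrite ?in_setU ?hy // => _ ya _; rewrite eq_sym.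
Qed.

Lemma eqV (K : pzRingType) G' G u v a b Na Nb (f : T -> 'I_3 -> K) (w : {set T} -> K) z k :
  simple_graph G' -> D1 G' G u v a b Na Nb -> z \in gV G' ->
  \sum_(e in gE G) w e * rent f e z k =
    \sum_(e in gE G' :\ [set u; v]) w e * rent f e z k
    + (if z \in Na then w [set a; z] * (f z k - f a k) else 0)
    + (if z \in Nb then w [set b; z] * (f z k - f b k) else 0).
Proof.
move=> sG hD hz; have [hE _ hN _] := D1_facts sG hD.
have [_ [aV bV ab] _ _ _] := hD.
have za : z != a by apply/eqP => e; subst z; rewrite hz in aV.
have zb : z != b by apply/eqP => e; subst z; rewrite hz in bV.
rewrite (SD _ sG hD) [X in w [set a; b] * X]rent_out ?mulr0 ?addr0; last first.
  by rewrite !inE negb_or za zb.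
rewrite -addrA -addrA; congr (_ + _); congr (_ + _).
  rewrite -sum_if1; apply: eq_bigr => y hy; rewrite rent2 ?(negbTE za).
    by rewrite eq_sym; case: eqP => [->|]; rewrite ?mulr0.
  by case: (hN y); rewrite ?in_setU ?hy // => _ ya _; rewrite eq_sym.
rewrite -sum_if1; apply: eq_bigr => y hy; rewrite rent2 ?(negbTE zb).
  by rewrite eq_sym; case: eqP => [->|]; rewrite ?mulr0.
by case: (hN y); rewrite ?in_setU ?hy ?orbT // => _ _ yb; rewrite eq_sym.
Qed.


Lemma sum_set3 (K : nmodType) (u v x : T) (F : T -> K) : u != v -> u != x -> v != x ->
  \sum_(y in [set u; v; x]) F y = F u + F v + F x.
Proof.
move=> uv ux vx; rewrite setUC big_setU1 ?big_setU1 ?big_set1 ?addrA 1?addrC //.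
- by rewrite inE.
- by rewrite !inE negb_or !(eq_sym x) ux vx.
Qed.

Lemma set3_split (A : {set T}) u v : #|A| = 3%N -> u \in A -> v \in A -> u != v ->
  exists x, [/\ x != u, x != v & A = [set u; v; x]].
Proof.
move=> cA uA vA uv.
have : #|A :\: [set u; v]| == 1%N.
  rewrite cardsD cA (setIidPr _) ?cards2 ?uv //.
  by apply/subsetP => y; rewrite !inE => /orP [] /eqP ->.
case/cards1P => x hx.
have : x \in A :\: [set u; v] by rewrite hx inE.
rewrite !inE negb_or => /andP [/andP [xu xv] xA].
exists x; split => //; apply/setP => y; rewrite !inE.
case: (boolP (y \in [set u; v])) => hy.
  move: (hy); rewrite !inE => /orP [] /eqP ->; rewrite ?eqxx ?orbT ?uA ?vA //.
have : (y \in A :\: [set u; v]) = (y \in A) by rewrite inE hy.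
rewrite hx inE => <-; move: hy; rewrite !inE negb_or => /andP [/negbTE -> /negbTE ->].
by [].
Qed.

Lemma set3_any (A : {set T}) : #|A| = 3%N ->
  exists y1 y2 y3, [/\ y1 != y2, y1 != y3, y2 != y3 & A = [set y1; y2; y3]].
Proof.
move=> cA; have : (0 < #|A|)%N by rewrite cA.
case/card_gt0P => y1 y1A.
have : #|A :\ y1| == 2%N by move: (cardsD1 y1 A); rewrite y1A cA add1n => -[<-].
case/cards2P => y2 [y3 [y23 e]].
have : y2 \in A :\ y1 by rewrite e !inE eqxx.
have : y3 \in A :\ y1 by rewrite e !inE eqxx orbT.
rewrite !inE => /andP [y31 y3A] /andP [y21 y2A].
exists y1, y2, y3; split => //; try by rewrite eq_sym.
apply/setP => y; rewrite !inE.
case: (eqVneq y y1) => [->|yy1] //=.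
have : (y \in A :\ y1) = (y \in A) by rewrite !inE yy1.
by rewrite e !inE => <-.
Qed.


Lemma all_zero (K : nmodType) G' G u v a b Na Nb (w : {set T} -> K) :
  D1 G' G u v a b Na Nb -> (forall e, e \in gE G' :\ [set u; v] -> w e = 0) ->
  w [set a; b] = 0 -> (forall y, y \in Na -> w [set a; y] = 0) ->
  (forall y, y \in Nb -> w [set b; y] = 0) -> forall e, e \in gE G -> w e = 0.
Proof.
case=> _ _ _ _ [_ ->] h1 h2 h3 h4 e.
rewrite !in_setU => /orP [/orP [he | /set1P ->] | /orP [] /imsetP [y hy ->]] //; by auto.
Qed.


Lemma set3_one (A : {set T}) u : #|A| = 3%N -> u \in A ->
  exists x1 x2, [/\ x1 != u, x2 != u, x1 != x2 & A = [set u; x1; x2]].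
Proof.
move=> cA uA.
have : #|A :\ u| == 2%N by move: (cardsD1 u A); rewrite uA cA add1n => -[<-].
case/cards2P => x1 [x2 [x12 e]].
have : x1 \in A :\ u by rewrite e !inE eqxx.
have : x2 \in A :\ u by rewrite e !inE eqxx orbT.
rewrite !inE => /andP [x2u x2A] /andP [x1u x1A].
exists x1, x2; split => //.
apply/setP => y; rewrite !inE.
case: (eqVneq y u) => [->|yu] //=.
have : (y \in A :\ u) = (y \in A) by rewrite !inE yu.
by rewrite e !inE => <-.
Qed.

End Gr.

Lemma core_i (R : realType) (T : finType) (p : T -> 'rV[R]_3) G' G u v a b Na Nb :
  generic p -> simple_graph G' -> D1 G' G u v a b Na Nb -> u \in Na -> v \in Na ->
  (forall w : {set T} -> R, (forall z, z \in gV G' -> forall k,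
      \sum_(e in gE G') w e * rent (fun z k => p z 0 k) e z k = 0) ->
      forall e, e \in gE G' -> w e = 0) ->
  forall w : {set T} -> R, (forall z, z \in gV G -> forall k,
      \sum_(e in gE G) w e * rent (fun z k => if z == a then p u 0 k + 2 * (p v 0 k - p u 0 k)
                                              else p z 0 k) e z k = 0) ->
  forall e, e \in gE G -> w e = 0.
Proof.
move=> gp sG hD uNa vNa hG'.
set fq := (fun z k => _).
move=> w hw.
have [hE [uV vV uv] hN hVV] := D1_facts sG hD.
have [_ [aV bV ab] [NaV NbV cNa cNb] _ [hV _]] := hD.
have [x [xu xv eNa]] := set3_split cNa uNa vNa uv.
have xNa : x \in Na by rewrite eNa !inE eqxx !orbT.
have hNa : forall y, y \in Na -> [/\ y \in gV G', y != a & y != b].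
  by move=> y hy; apply: hN; rewrite in_setU hy.
have hNb : forall y, y \in Nb -> [/\ y \in gV G', y != a & y != b].
  by move=> y hy; apply: hN; rewrite in_setU hy orbT.
have [xV xa xb] := hNa x xNa.
have [y1 [y2 [y3 [y12 y13 y23 eNb]]]] := set3_any cNb.
have y1N : y1 \in Nb by rewrite eNb !inE eqxx.
have y2N : y2 \in Nb by rewrite eNb !inE eqxx !orbT.
have y3N : y3 \in Nb by rewrite eNb !inE eqxx !orbT.
have [y1V y1a y1b] := hNb y1 y1N.
have [y2V y2a y2b] := hNb y2 y2N.
have [y3V y3a y3b] := hNb y3 y3N.
have [_ ua ub] := hNa u uNa.
have [_ va vb] := hNa v vNa.
have ux : u != x by rewrite eq_sym.
have ba : b != a by rewrite eq_sym.
have vx : v != x by rewrite eq_sym.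
have aG : a \in gV G by rewrite hV !inE eqxx orbT.
have bG : b \in gV G by rewrite hV !inE eqxx !orbT.
have fqa : forall k, fq a k = p u 0 k + 2 * (p v 0 k - p u 0 k) by move=> k; rewrite /fq eqxx.
have fqo : forall z k, z != a -> fq z k = p z 0 k by move=> z k /negbTE za; rewrite /fq za.
have [c1 c2 c3] : [/\ 2 * w [set a; b] + 2 * w [set a; u] + w [set a; v] + 2 * w [set a; x] = 0,
   - w [set a; x] = 0 & - w [set a; b] = 0].
  apply: (NC gp uv ux ub vx vb xb) => k; have := hw a aG k; rewrite (eqA _ _ _ sG hD) eNa sum_set3 //.
  rewrite !fqa !fqo // => h; apply: eq_trans _ h; ring.
have wax : w [set a; x] = 0 by lra.
have wab : w [set a; b] = 0 by lra.
have wav : w [set a; v] = - 2 * w [set a; u] by lra.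
have hDs := D1_swapab hD.
have eba : [set b; a] = [set a; b] :> {set T} by rewrite setUC.
have b12 : b != y1 by rewrite eq_sym.
have b13 : b != y2 by rewrite eq_sym.
have b14 : b != y3 by rewrite eq_sym.
have [d1 d2 d3] : [/\ - w [set b; y1] = 0, - w [set b; y2] = 0 & - w [set b; y3] = 0].
  apply: (NC gp b12 b13 b14 y12 y13 y23) => k.
  have := hw b bG k; rewrite (eqA _ _ _ sG hDs) eba wab mul0r add0r eNb sum_set3 //.
  rewrite !fqo // => h; apply: eq_trans _ h; ring.
have wNb : forall y, y \in Nb -> w [set b; y] = 0.
  move=> y; rewrite eNb !inE => /orP [/orP [] | ] /eqP ->; lra.
have wNa : forall y, y \in Na -> y != u -> y != v -> w [set a; y] = 0.
  by move=> y; rewrite eNa !inE => /orP [/orP [] | ] /eqP -> //; rewrite eqxx.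
pose w' := fun e => if e == [set u; v] then 2 * w [set a; u] else w e.
have hw' := hG' w'.
have huvE : [set u; v] \in gE G' by case: hD.
have : forall e, e \in gE G' -> w' e = 0.
  apply: hw' => z zV k.
  rewrite (big_setD1 [set u; v]) //= {1}/w' eqxx.
  have := hw z (hVV z zV) k; rewrite (eqV _ _ _ sG hD zV).
  have za : z != a by apply/eqP => e; subst z; rewrite zV in aV.
  move=> h; apply: eq_trans _ h.
  have -> : \sum_(i in gE G' :\ [set u; v]) w' i * rent (fun z0 : T => [eta p z0 0]) i z k
         = \sum_(e in gE G' :\ [set u; v]) w e * rent fq e z k.
    apply: eq_bigr => e; rewrite in_setD1 => /andP [ne he]; rewrite /w' (negbTE ne).
    congr (_ * _); apply: rent_eq; last by rewrite fqo.
    move=> y hy; rewrite fqo //; apply/eqP => ey; subst y.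
    by case: (hE e he); rewrite hy.
  have -> : (if z \in Nb then w [set b; z] * (fq z k - fq b k) else 0) = 0.
    by case: ifP => hzb //; rewrite wNb // mul0r.
  rewrite addr0 addrC; congr (_ + _).
  rewrite rent2 // fqa fqo //.
  case: (eqVneq z u) => [->|zu]; first by rewrite uNa; ring.
  case: (eqVneq z v) => [->|zv]; first by rewrite vNa wav; ring.
  by rewrite mulr0; case: ifP => hz //; rewrite wNa // mul0r.
move=> h'.
have wau : w [set a; u] = 0.
  by have := h' _ huvE; rewrite /w' eqxx => /eqP; rewrite mulf_eq0 pnatr_eq0 orFb => /eqP.
apply: (all_zero hD) => //.
- move=> e; rewrite in_setD1 => /andP [ne he]; have := h' e he.
  by rewrite /w' (negbTE ne).
- move=> y; rewrite eNa !inE => /orP [/orP [] | ] /eqP -> //.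
  by rewrite wav wau mulr0.
Qed.

Lemma core_iii (R : realType) (T : finType) (p : T -> 'rV[R]_3) G' G u v a b Na Nb :
  generic p -> simple_graph G' -> D1 G' G u v a b Na Nb -> u \in Na -> u \notin Nb ->
  v \in Nb -> v \notin Na ->
  (forall w : {set T} -> R, (forall z, z \in gV G' -> forall k,
      \sum_(e in gE G') w e * rent (fun z k => p z 0 k) e z k = 0) ->
      forall e, e \in gE G' -> w e = 0) ->
  forall w : {set T} -> R, (forall z, z \in gV G -> forall k,
      \sum_(e in gE G) w e * rent (fun z k => if z == a then p u 0 k + 2 * (p v 0 k - p u 0 k)
                                  else if z == b then p u 0 k + 3 * (p v 0 k - p u 0 k)
                                              else p z 0 k) e z k = 0) ->
  forall e, e \in gE G -> w e = 0.
Proof.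
move=> gp sG hD uNa uNb vNb vNa hG'.
set fq := (fun z k => _).
move=> w hw.
have [hE [uV vV uv] hN hVV] := D1_facts sG hD.
have [_ [aV bV ab] [NaV NbV cNa cNb] _ [hV _]] := hD.
have hNa : forall y, y \in Na -> [/\ y \in gV G', y != a & y != b].
  by move=> y hy; apply: hN; rewrite in_setU hy.
have hNb : forall y, y \in Nb -> [/\ y \in gV G', y != a & y != b].
  by move=> y hy; apply: hN; rewrite in_setU hy orbT.
have [x1 [x2 [x1u x2u x12 eNa]]] := set3_one cNa uNa.
have [y1 [y2 [y1v y2v y12 eNb]]] := set3_one cNb vNb.
have x1N : x1 \in Na by rewrite eNa !inE eqxx !orbT.
have x2N : x2 \in Na by rewrite eNa !inE eqxx !orbT.
have y1N : y1 \in Nb by rewrite eNb !inE eqxx !orbT.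
have y2N : y2 \in Nb by rewrite eNb !inE eqxx !orbT.
have [x1V x1a x1b] := hNa x1 x1N.
have [x2V x2a x2b] := hNa x2 x2N.
have [y1V y1a y1b] := hNb y1 y1N.
have [y2V y2a y2b] := hNb y2 y2N.
have [_ ua ub] := hNa u uNa.
have [_ va vb] := hNb v vNb.
have ux1 : u != x1 by rewrite eq_sym.
have ux2 : u != x2 by rewrite eq_sym.
have vx1 : v != x1 by apply/eqP => e; subst; rewrite x1N in vNa.
have vx2 : v != x2 by apply/eqP => e; subst; rewrite x2N in vNa.
have uy1 : u != y1 by apply/eqP => e; subst; rewrite y1N in uNb.
have uy2 : u != y2 by apply/eqP => e; subst; rewrite y2N in uNb.
have vy1 : v != y1 by rewrite eq_sym.
have vy2 : v != y2 by rewrite eq_sym.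
have ba : b != a by rewrite eq_sym.
have aG : a \in gV G by rewrite hV !inE eqxx orbT.
have bG : b \in gV G by rewrite hV !inE eqxx !orbT.
have fqa : forall k, fq a k = p u 0 k + 2 * (p v 0 k - p u 0 k) by move=> k; rewrite /fq eqxx.
have fqb : forall k, fq b k = p u 0 k + 3 * (p v 0 k - p u 0 k).
  by move=> k; rewrite /fq eqxx (negbTE ba).
have fqo : forall z k, z != a -> z != b -> fq z k = p z 0 k.
  by move=> z k /negbTE za /negbTE zb; rewrite /fq za zb.
have [c1 c2 c3] : [/\ - w [set a; b] + 2 * w [set a; u] + 2 * w [set a; x1] + 2 * w [set a; x2] = 0,
   - w [set a; x1] = 0 & - w [set a; x2] = 0].
  apply: (NC gp uv ux1 ux2 vx1 vx2 x12) => k.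
  have := hw a aG k; rewrite (eqA _ _ _ sG hD) eNa sum_set3 //.
  rewrite !fqa fqb !fqo // => h; apply: eq_trans _ h; ring.
have hDs := D1_swapab hD.
have eba : [set b; a] = [set a; b] :> {set T} by rewrite setUC.
have [d1 d2 d3] : [/\ w [set a; b] + 2 * w [set b; v] + 3 * w [set b; y1] + 3 * w [set b; y2] = 0,
   - w [set b; y1] = 0 & - w [set b; y2] = 0].
  apply: (NC gp uv uy1 uy2 vy1 vy2 y12) => k.
  have := hw b bG k; rewrite (eqA _ _ _ sG hDs) eba eNb sum_set3 //.
  rewrite !fqa !fqb !fqo // => h; apply: eq_trans _ h; ring.
have wab : w [set a; b] = 2 * w [set a; u] by lra.
have wbv : w [set b; v] = - w [set a; u] by lra.
have wNa : forall y, y \in Na -> y != u -> w [set a; y] = 0.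
  by move=> y; rewrite eNa !inE => /orP [/orP [] | ] /eqP -> //; rewrite ?eqxx //; lra.
have wNb : forall y, y \in Nb -> y != v -> w [set b; y] = 0.
  by move=> y; rewrite eNb !inE => /orP [/orP [] | ] /eqP -> //; rewrite ?eqxx //; lra.
pose w' := fun e => if e == [set u; v] then 2 * w [set a; u] else w e.
have hw' := hG' w'.
have huvE : [set u; v] \in gE G' by case: hD.
have : forall e, e \in gE G' -> w' e = 0.
  apply: hw' => z zV k.
  rewrite (big_setD1 [set u; v]) //= {1}/w' eqxx.
  have := hw z (hVV z zV) k; rewrite (eqV _ _ _ sG hD zV).
  have za : z != a by apply/eqP => e; subst z; rewrite zV in aV.
  have zb : z != b by apply/eqP => e; subst z; rewrite zV in bV.
  move=> h; apply: eq_trans _ h.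
  have -> : \sum_(i in gE G' :\ [set u; v]) w' i * rent (fun z0 : T => [eta p z0 0]) i z k
         = \sum_(e in gE G' :\ [set u; v]) w e * rent fq e z k.
    apply: eq_bigr => e; rewrite in_setD1 => /andP [ne he]; rewrite /w' (negbTE ne).
    congr (_ * _); apply: rent_eq; last by rewrite fqo.
    move=> y hy; case: (hE e he) => ae be; rewrite fqo //; apply/eqP => ey; subst y.
      by rewrite hy in ae.
    by rewrite hy in be.
  rewrite -addrA addrC; congr (_ + _).
  rewrite rent2 // fqa fqb fqo //.
  case: (eqVneq z u) => [->|zu]; first by rewrite uNa (negbTE uNb); ring.
  case: (eqVneq z v) => [->|zv]; first by rewrite vNb (negbTE vNa) wbv; ring.
  rewrite mulr0; case: ifP => hza; rewrite ?wNa ?mul0r //; case: ifP => hzb; by rewrite ?wNb ?mul0r ?addr0.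
move=> h'.
have wau : w [set a; u] = 0.
  by have := h' _ huvE; rewrite /w' eqxx => /eqP; rewrite mulf_eq0 pnatr_eq0 orFb => /eqP.
apply: (all_zero hD) => //.
- move=> e; rewrite in_setD1 => /andP [ne he]; have := h' e he.
  by rewrite /w' (negbTE ne).
- by rewrite wab wau mulr0.
- move=> y hy; case: (eqVneq y u) => [->|yu]; first exact: wau.
  exact: wNa.
- move=> y hy; case: (eqVneq y v) => [->|yv]; last exact: wNb.
  by rewrite wbv wau oppr0.
Qed.

Lemma exists_pos (R : realType) (T : finType) (p : T -> 'rV[R]_3) G' G u v a b Na Nb :
  generic p -> simple_graph G' -> D1 G' G u v a b Na Nb -> rows_independent G' p ->
  exists fq : T -> 'I_3 -> R, forall w : {set T} -> R, (forall z, z \in gV G -> forall k,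
      \sum_(e in gE G) w e * rent fq e z k = 0) -> forall e, e \in gE G -> w e = 0.
Proof.
move=> gp sG hD hG'.
have hD0 := hD; case: hD0 => _ _ _ [uN vN] _.
move: uN vN; rewrite !in_setU.
case: (boolP (u \in Na)) => uNa; case: (boolP (v \in Na)) => vNa /=.
- by move=> _ _; eexists; apply: (core_i gp sG hD uNa vNa hG').
- move=> _ vNb; case: (boolP (u \in Nb)) => uNb.
    by eexists; apply: (core_i gp sG (D1_swapab hD) uNb vNb hG').
  by eexists; apply: (core_iii gp sG hD uNa uNb vNb vNa hG').
- move=> uNb _; case: (boolP (v \in Nb)) => vNb.
    by eexists; apply: (core_i gp sG (D1_swapab hD) uNb vNb hG').
  by eexists; apply: (core_iii gp sG (D1_swapuv hD) vNa vNb uNb uNa hG').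
- by move=> uNb vNb; eexists; apply: (core_i gp sG (D1_swapab hD) uNb vNb hG').
Qed.

Theorem lemma5p7 (R : realType) (T : finType) (G' G : graph T) :
  simple_graph G' -> R3_independent R G' -> double_1_extension G' G ->
  R3_independent R G.
Proof.
move=> sG hG' [u [v [a [b [Na [Nb hD]]]]]] p gp.
have [fq hfq] := exists_pos gp sG (hD : D1 G' G u v a b Na Nb) (hG' p gp).
apply: (KM_indep (f := fun z k => p z 0 k)).
apply: (transfer (q := fun z => \row_k fq z k)) => //.
have -> : (fun z k => (\row_k fq z k) 0 k) = fq.
  by apply: boolp.funext => z; apply: boolp.funext => k; rewrite mxE.
exact: indep_KM.
Qed.
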